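(* Let $F$ be a face of $\delta\mathcal{A}_{\bm o}$, $\bm a,\bm b\in\operatorname{relint}(F)$, and $I,J,K$ a partition of $[m]$. Write $P_{\bm a}=P(\bm a,I,J,K)$ and $P_{\bm b}=P(\bm b,I,J,K)$. Then the map $\Phi$ from the face poset of $P_{\bm a}$ to that of $P_{\bm b}$ defined by $\Phi(\emptyset)=\emptyset$ and $\Phi(G)=P\big(\bm b,I_{P_{\bm a}}(G),J_{P_{\bm a}}(G),K_{P_{\bm a}}(G)\big)$ for nonempty faces $G$ is a well-defined bijection, and for each nonempty face $G$ of $P_{\bm a}$, $\Phi(G)$ is nonempty and has the same active triple index (with respect to $P_{\bm b}$) as $G$ (with respect to $P_{\bm a}$).
   Context: Fix nonzero $\bm u_1,\dots,\bm u_m\in\mathbb{R}^n$ (repetitions and parallel vectors allowed), $U$ the matrix with these rows; $U_I,\bm a_I$ denote rows/entries indexed by $I$. For a partition $I,J,K$ of $[m]$, $P(\bm a,I,J,K)=\{\bm x\in\mathbb{R}^n:U_I\bm x=\bm a_I,\ U_J\bm x\le\bm a_J,\ U_K\bm x\ge\bm a_K\}$; faces of a polyhedron include $\emptyset$ and the polyhedron itself. For a nonempty face $G$ of $P=P(\bm a,I,J,K)$: $I_P(G)=\{i\in[m]:\langle\bm u_i,\bm x\rangle=a_i\}$ for any $\bm x\in\operatorname{relint}(G)$, $J_P(G)=J\setminus I_P(G)$, $K_P(G)=K\setminus I_P(G)$; $(I_P(G),J_P(G),K_P(G))$ is the active triple index. A circuit is $C\subseteq[m]$ with $\{\bm u_i:i\in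 C\}$ a minimal linearly dependent indexed family; $\bm c^C$ satisfies $\sum c_i\bm u_i=\bm0$, $c_i\neq0\iff i\in C$. The derived arrangement $\delta\mathcal{A}_{\bm o}$ consists of the hyperplanes $\langle\bm c^C,\bm y\rangle=0$ in $\mathbb{R}^m$; its open faces are the nonempty sets $\{\bm y:\operatorname{sign}\langle \bm c^C,\bm y\rangle=\epsilon_C\ \forall C\}$, faces are their closures, and $\operatorname{relint}(F)$ is the open face with closure $F$. *)

(* Defs.v *)
From HB Require Import structures.
From mathcomp Require Import all_boot all_order all_algebra.
From mathcomp Require Import reals.
Set Implicit Arguments. Unset Strict Implicit. Unset Printing Implicit Defensive.
Import Order.TTheory GRing.Theory Num.Theory.
Local Open Scope ring_scope.

Section PolyDefs.
Variables (R : realType) (n m : nat).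

Definition pset (k : nat) := 'cV[R]_k -> Prop.

Definition dotv (k : nat) (u v : 'cV[R]_k) : R := \sum_(i < k) u i 0 * v i 0.

Definition near_inf (k : nat) (x y : 'cV[R]_k) (e : R) : Prop :=
  forall i, `|x i 0 - y i 0| < e.

Definition affhull (k : nat) (S : pset k) : pset k := fun y =>
  exists (N : nat) (z : 'I_N -> 'cV[R]_k) (l : 'I_N -> R),
    (forall t, S (z t)) /\ \sum_(t < N) l t = 1 /\ y = \sum_(t < N) l t *: z t.

Definition relint (k : nat) (S : pset k) : pset k := fun x =>
  S x /\ exists e : R, 0 < e /\
    forall y, affhull S y -> near_inf x y e -> S y.

Definition closure (k : nat) (S : pset k) : pset k := fun y =>
  forall e : R, 0 < e -> exists z, S z /\ near_inf z y e.

(* rows of U : 'M_(m,n) are u_1..u_m; (U *m x) i 0 = <u_i, x> *)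
Definition Ppoly (U : 'M[R]_(m, n)) (a : 'cV[R]_m) (I J K : {set 'I_m}) : pset n :=
  fun x => forall i,
    (i \in I -> (U *m x) i 0 = a i 0) /\
    (i \in J -> (U *m x) i 0 <= a i 0) /\
    (i \in K -> (U *m x) i 0 >= a i 0).

(* faces of a polyhedron (including the empty set and the polyhedron itself) *)
Definition isFace (P : pset n) (G : pset n) : Prop :=
  exists (c : 'cV[R]_n) (d : R),
    (forall x, P x -> dotv c x <= d) /\ G = (fun x => P x /\ dotv c x = d).

Definition tight (U : 'M[R]_(m, n)) (a : 'cV[R]_m) (x : 'cV[R]_n) : {set 'I_m} :=
  [set i | (U *m x) i 0 == a i 0].

Definition dependent (U : 'M[R]_(m, n)) (C : {set 'I_m}) : Prop :=
  exists c : 'I_m -> R, (forall i, i \notin C -> c i = 0) /\ (exists i, c i != 0) /\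
    \sum_(i < m) c i *: row i U = 0.

Definition circuit (U : 'M[R]_(m, n)) (C : {set 'I_m}) : Prop :=
  dependent U C /\ forall C' : {set 'I_m}, C' \proper C -> ~ dependent U C'.

Definition circuit_vec (U : 'M[R]_(m, n)) (C : {set 'I_m}) (c : 'cV[R]_m) : Prop :=
  \sum_(i < m) c i 0 *: row i U = 0 /\ forall i, c i 0 != 0 <-> i \in C.

(* derived arrangement, given the chosen circuit vectors cC *)
Definition dopen_set (U : 'M[R]_(m, n)) (cC : {set 'I_m} -> 'cV[R]_m)
    (eps : {set 'I_m} -> R) : pset m :=
  fun y => forall C, circuit U C -> Num.sg (dotv (cC C) y) = eps C.

Definition dopen_face U cC eps : Prop := exists y, dopen_set U cC eps y.

Definition dface U cC (F : pset m) : Prop :=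
  exists eps, dopen_face U cC eps /\ F = closure (dopen_set U cC eps).

(* relint of a face F of the derived arrangement: the open face with closure F *)
Definition drelint U cC (F : pset m) : pset m := fun y =>
  exists eps, dopen_face U cC eps /\ closure (dopen_set U cC eps) = F /\
    dopen_set U cC eps y.

End PolyDefs.

(* Main.v *)
Require Import Defs.
From HB Require Import structures.
From mathcomp Require Import all_boot all_order all_algebra.
From mathcomp Require Import reals.
From mathcomp Require Import ring lra.
From Stdlib Require Import Classical.
From mathcomp Require boolp.
Set Implicit Arguments. Unset Strict Implicit. Unset Printing Implicit Defensive.
Import Order.TTheory GRing.Theory Num.Theory.
Local Open Scope ring_scope.
Section Seqs.
Variable R : realFieldType.

Lemma foldr_max_ge (s : seq R) m0 x : x \in s -> x <= foldr Num.max m0 s.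
Proof.
elim: s => //= y s IH; rewrite inE => /orP[/eqP ->|xs]; rewrite le_max ?lexx //.
by rewrite IH ?orbT.
Qed.

Lemma foldr_max_mem (s : seq R) m0 : foldr Num.max m0 s \in m0 :: s.
Proof.
elim: s => [|y s IH] /=; first by rewrite inE.
case: (leP y (foldr Num.max m0 s)) => _.
  by move: IH; rewrite !inE => /orP[->|->]; rewrite ?orbT.
by rewrite !inE eqxx orbT.
Qed.

Lemma foldr_min_le (s : seq R) m0 x : x \in s -> foldr Num.min m0 s <= x.
Proof.
elim: s => //= y s IH; rewrite inE => /orP[/eqP ->|xs]; rewrite ge_min ?lexx //.
by rewrite IH ?orbT.
Qed.

Lemma foldr_min_mem (s : seq R) m0 : foldr Num.min m0 s \in m0 :: s.
Proof.
elim: s => [|y s IH] /=; first by rewrite inE.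
case: (leP y (foldr Num.min m0 s)) => _.
  by rewrite !inE eqxx orbT.
by move: IH; rewrite !inE => /orP[->|->]; rewrite ?orbT.
Qed.

Lemma sum_ge_term (I : finType) (F : I -> R) j : (forall i, 0 <= F i) -> F j <= \sum_i F i.
Proof.
move=> h; rewrite (bigD1 j) //= lerDl; apply: sumr_ge0 => i _; exact: h.
Qed.

Lemma between (I : finType) (A B : pred I) (L H : I -> R) :
  (forall i j, A i -> B j -> L i < H j) ->
  exists z, (forall i, A i -> L i < z) /\ (forall j, B j -> z < H j).
Proof.
move=> hp.
pose m0 : R := - (\sum_j `|H j|) - 1.
pose M0 : R := \sum_i `|L i| + 1.
have hm0 j : m0 < H j.
  have := @sum_ge_term I (fun j => `|H j|) j (fun _ => normr_ge0 _).
  rewrite /m0 => h2. have : - H j <= `|H j| by rewrite -normrN ler_norm. lra.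
have hM0 i : L i < M0.
  have := @sum_ge_term I (fun j => `|L j|) i (fun _ => normr_ge0 _).
  have : L i <= `|L i| by rewrite ler_norm. rewrite /M0; lra.
have m0M0 : m0 < M0.
  have h1 : 0 <= \sum_j `|H j| by apply: sumr_ge0.
  have h2 : 0 <= \sum_i `|L i| by apply: sumr_ge0.
  rewrite /m0 /M0; lra.
pose lo := foldr Num.max m0 [seq L i | i <- enum A].
pose hi := foldr Num.min M0 [seq H j | j <- enum B].
have hlo i : A i -> L i <= lo.
  move=> Ai; apply: foldr_max_ge; apply/mapP; exists i => //; by rewrite mem_enum.
have hhi j : B j -> hi <= H j.
  move=> Bj; apply: foldr_min_le; apply/mapP; exists j => //; by rewrite mem_enum.
have lohi : lo < hi.
  have := foldr_max_mem [seq L i | i <- enum A] m0; rewrite -/lo inE => /orP[/eqP ->|/mapP[i]].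
    have := foldr_min_mem [seq H j | j <- enum B] M0; rewrite -/hi inE => /orP[/eqP ->|/mapP[j _ ->]] //.
  rewrite mem_enum => Ai ->.
  have := foldr_min_mem [seq H j | j <- enum B] M0; rewrite -/hi inE => /orP[/eqP ->|/mapP[j]] //.
  rewrite mem_enum => Bj ->; exact: hp.
exists ((lo + hi) / 2); split.
  move=> i Ai; apply: (le_lt_trans (hlo i Ai)); exact: (midf_lt lohi).1.
move=> j Bj; apply: (lt_le_trans _ (hhi j Bj)); exact: (midf_lt lohi).2.
Qed.

End Seqs.
Section Motz.
Variable R : realFieldType.

Definition ev N (l y : 'I_N -> R) := \sum_(k < N) l k * y k.

Definition ext N (y : 'I_N -> R) (z : R) : 'I_N.+1 -> R :=
  fun k => if unlift ord_max k is Some k' then y k' else z.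

Lemma widen_lift N (k : 'I_N) : widen_ord (leqnSn N) k = lift ord_max k.
Proof. by apply: val_inj; rewrite /= /bump leqNgt ltn_ord. Qed.

Lemma ext_w N y z (k : 'I_N) : ext y z (widen_ord (leqnSn N) k) = y k.
Proof. by rewrite /ext widen_lift liftK. Qed.

Lemma ext_m N (y : 'I_N -> R) z : ext y z ord_max = z.
Proof. by rewrite /ext unlift_none. Qed.

Definition pr N (l : 'I_N.+1 -> R) : 'I_N -> R := fun k => l (widen_ord (leqnSn N) k).

Lemma ev_split N (l y : 'I_N.+1 -> R) : ev l y = ev (pr l) (pr y) + l ord_max * y ord_max.
Proof. by rewrite /ev big_ord_recr. Qed.

Lemma ev_ext N (l : 'I_N.+1 -> R) y z : ev l (ext y z) = ev (pr l) y + l ord_max * z.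
Proof.
rewrite ev_split ext_m; congr (_ + _); apply: eq_bigr => k _; by rewrite /pr ext_w.
Qed.

Lemma ord_cases N (k : 'I_N.+1) : k = ord_max \/ exists k', k = widen_ord (leqnSn N) k'.
Proof.
case: (unliftP ord_max k) => [k' ->|->]; last by left.
by right; exists k'; rewrite widen_lift.
Qed.

Lemma ev_lin N (f g y : 'I_N -> R) c : ev (fun k => f k - c * g k) y = ev f y - c * ev g y.
Proof.
rewrite /ev mulr_sumr -sumrB; apply: eq_bigr => k _; by rewrite mulrBl mulrA.
Qed.

Lemma ev_if N (b : bool) (f y : 'I_N -> R) : ev (fun k => if b then f k else 0) y = if b then ev f y else 0.
Proof. by case: b => //; rewrite /ev big1 // => k _; rewrite mul0r. Qed.

Lemma sum_upd (I : finType) (f g : I -> R) e x :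
  \sum_i (if i == e then x else f i) * g i = \sum_i f i * g i + (x - f e) * g e.
Proof.
rewrite (bigD1 e) //= eqxx [in RHS](bigD1 e) //=.
rewrite (eq_bigr (fun i => f i * g i)); last by move=> i /negbTE ->.
by rewrite mulrBl; ring.
Qed.

Definition msol N (I : finType) (l : I -> 'I_N -> R) (S : pred I) (y : 'I_N -> R) :=
  forall i, if S i then is_true (0 < ev (l i) y) else ev (l i) y = 0.
Definition mcert N (I : finType) (l : I -> 'I_N -> R) (S : pred I) (mu : I -> R) :=
  [/\ forall i, S i -> 0 <= mu i, exists i, S i /\ 0 < mu i & forall k, \sum_i mu i * l i k = 0].

Lemma motzkin N : forall (I : finType) (l : I -> 'I_N -> R) S,
  (exists y, msol l S y) \/ (exists mu, mcert l S mu).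
Proof.
elim: N => [|N IH] I l S.
  case: (pickP S) => [i0 Si0|noS].
    right; exists (fun j => (j == i0)%:R); split.
    - by move=> i _; rewrite ler0n.
    - by exists i0; rewrite eqxx ltr01.
    - by case.
  by left; exists (fun _ => 0) => i; rewrite noS /ev big_ord0.
pose p i := pr (l i). pose q i := l i ord_max.
case: (pickP (fun e => ~~ S e && (q e != 0))) => [e /andP[nSe qe]|noE].
- pose l' i k := p i k - q i / q e * p e k.
  case: (IH I l' S) => [[y' hy']|[mu' [h1 h2 h3]]].
  + left; exists (ext y' (- ev (p e) y' / q e)) => i.
    have -> : ev (l i) (ext y' (- ev (p e) y' / q e)) = ev (l' i) y'.
      by rewrite ev_ext /l' ev_lin -/(p i) -/(q i); field.
    exact: hy'.
  + pose c := \sum_j mu' j * q j / q e.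
    right; exists (fun i => if i == e then mu' e - c else mu' i); split.
    * move=> i Si; case: eqP => [ei|_]; last exact: h1.
      by move: nSe; rewrite -ei Si.
    * case: h2 => i [Si hi]; exists i; split => //.
      case: eqP => [ei|//]; by move: nSe; rewrite -ei Si.
    * have hc : c * q e = \sum_i mu' i * q i by rewrite /c -mulr_suml divfK.
      move=> k; rewrite sum_upd addrAC subrr add0r mulNr.
      case: (ord_cases k) => [->|[k' ->]].
        by rewrite -/(q e) hc subrr.
      have := h3 k'; rewrite /l'.
      under eq_bigr do rewrite mulrBr.
      rewrite sumrB => h.
      have -> : l e (widen_ord (leqnSn N) k') = p e k' by [].
      rewrite -[X in _ = X]h; congr (_ - _).
      rewrite /c mulr_suml; apply: eq_bigr => i _; rewrite /q; ring.
-
  have eqq e : ~~ S e -> q e = 0.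
    by move=> nSe; move: (noE e) => /= /negbT; rewrite nSe /= negbK => /eqP.
  pose valid (x : I * I) := [&& S x.1, S x.2, 0 < q x.1 & q x.2 < 0].
  pose l'' (r : I -> R) (u : (I + I * I)%type) : R :=
    match u with
    | inl i => if q i == 0 then r i else 0
    | inr x => if valid x then (- q x.2) * r x.1 + q x.1 * r x.2 else 0 end.
  pose l' (u : (I + I * I)%type) (k : 'I_N) := l'' (fun i => p i k) u.
  pose S' (u : (I + I * I)%type) :=
    match u with inl i => S i && (q i == 0) | inr x => valid x end.
  case: (IH _ l' S') => [[y' hy']|[mu' [h1 h2 h3]]].
  + have hev u : ev (l' u) y' = l'' (fun i => ev (p i) y') u.
      case: u => [i|x]; rewrite /l' /l'' /=.
        by rewrite (ev_if (q i == 0) (p i)).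
      case: (valid x); last by rewrite /ev big1 // => k _; rewrite mul0r.
      rewrite /ev !mulr_sumr -big_split; apply: eq_bigr => k _ /=; ring.
    have hp : forall i j, S i && (0 < q i) -> S j && (q j < 0) ->
        - ev (p i) y' / q i < ev (p j) y' / (- q j).
      move=> i j /andP[Si qi] /andP[Sj qj].
      have := hy' (inr (i, j)); rewrite /= /valid /= Si Sj qi qj /= => hh.
      move: hh; rewrite hev /l'' /valid /= Si Sj qi qj /=.
      set A := - ev (p i) y' / q i; set B := ev (p j) y' / (- q j).
      have e1 : ev (p i) y' = - (A * q i) by rewrite /A; field; rewrite gt_eqF.
      have e2 : ev (p j) y' = B * (- q j) by rewrite /B; field; rewrite lt_eqF.
      rewrite e1 e2 => hh.
      have hq : 0 < q i * (- q j) by rewrite mulr_gt0 // oppr_gt0.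
      have : 0 < q i * (- q j) * (B - A) by move: hh; rewrite mulrBr; lra.
      by rewrite pmulr_rgt0 // subr_gt0.
    have [z [hz1 hz2]] := @between _ _ (fun i => S i && (0 < q i)) (fun j => S j && (q j < 0))
       (fun i => - ev (p i) y' / q i) (fun j => ev (p j) y' / (- q j)) hp.
    left; exists (ext y' z) => i; rewrite ev_ext -/(p i) -/(q i).
    case Si: (S i).
    * case: (ltgtP (q i) 0) => hq.
      - have := hz2 i; rewrite Si hq => /(_ isT).
        rewrite ltr_pdivlMr ?oppr_gt0 // => hh; lra.
      - have := hz1 i; rewrite Si hq => /(_ isT).
        rewrite ltr_pdivrMr // => hh; lra.
      - have := hy' (inl i); rewrite /= Si hq eqxx /= hev /= hq eqxx => hh.
        by rewrite mul0r addr0.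
    * have hq := eqq i (negbT Si).
      have := hy' (inl i); rewrite /= Si /= hev /= hq eqxx => ->.
      by rewrite mul0r addr0.
  + pose A i := if q i == 0 then mu' (inl i) else 0.
    pose B i := \sum_j (if valid (i, j) then mu' (inr (i, j)) * (- q j) else 0).
    pose C i := \sum_j (if valid (j, i) then mu' (inr (j, i)) * q j else 0).
    have hBt i j : 0 <= (if valid (i, j) then mu' (inr (i, j)) * (- q j) else 0).
      case hv: (valid (i, j)) => //; move: (hv); rewrite /valid /= => /and4P[_ _ _ qj].
      by rewrite mulr_ge0 ?h1 // oppr_ge0 ltW.
    have hCt i j : 0 <= (if valid (j, i) then mu' (inr (j, i)) * q j else 0).
      case hv: (valid (j, i)) => //; move: (hv); rewrite /valid /= => /and4P[_ _ qj _].
      by rewrite mulr_ge0 ?h1 // ltW.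
    have hB i : 0 <= B i by apply: sumr_ge0.
    have hC i : 0 <= C i by apply: sumr_ge0.
    have hA i : S i -> 0 <= A i.
      by move=> Si; rewrite /A; case: eqP => // /eqP hq; apply: h1; rewrite /= Si hq.
    have ident r : \sum_i (A i + B i + C i) * r i = \sum_u mu' u * l'' r u.
      rewrite big_sumType /=.
      under eq_bigr do rewrite !mulrDl.
      rewrite !big_split /= -addrA; congr (_ + _).
        by apply: eq_bigr => i _; rewrite /A; case: eqP => _; rewrite ?mul0r ?mulr0.
      have eB : \sum_i B i * r i =
          \sum_(x : I * I) (if valid x then mu' (inr x) * (- q x.2) else 0) * r x.1.
        rewrite /B; under eq_bigr do rewrite mulr_suml.
        by rewrite pair_bigA; apply: eq_bigr => -[i j].
      have eC : \sum_i C i * r i =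
          \sum_(x : I * I) (if valid x then mu' (inr x) * q x.1 else 0) * r x.2.
        rewrite /C; under eq_bigr do rewrite mulr_suml.
        by rewrite exchange_big pair_bigA; apply: eq_bigr => -[i j].
      rewrite eB eC -big_split; apply: eq_bigr => x _ /=.
      by case: (valid x); rewrite ?mul0r ?mulr0 ?addr0 //; ring.
    right; exists (fun i => A i + B i + C i); split.
    * by move=> i Si; rewrite !addr_ge0 ?hA.
    * case: h2 => -[i|[i j]] /= [hS hpos].
        exists i; move: hS => /andP[Si hq]; split => //.
        have : A i = mu' (inl i) by rewrite /A hq.
        have := hB i; have := hC i; lra.
      move: (hS); rewrite /valid /= => /and4P[Si Sj qi qj].
      exists i; split => //.
      have : mu' (inr (i, j)) * (- q j) <= B i.
        by have := @sum_ge_term _ _ (fun j => if valid (i, j) then mu' (inr (i, j)) * (- q j) else 0) j (hBt i);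
          rewrite /= hS.
      have : 0 < mu' (inr (i, j)) * (- q j) by rewrite mulr_gt0 // oppr_gt0.
      have := hA i Si; have := hC i; lra.
    * move=> k; case: (ord_cases k) => [->|[k' ->]].
        rewrite (ident q) big1 // => -[i|x] _ /=.
          by case: eqP => [->|]; rewrite mulr0.
        by case: (valid x); rewrite ?mulr0 //; rewrite mulNr [q x.1 * _]mulrC addNr mulr0.
      by rewrite (ident (fun i => p i k')); exact: h3.
Qed.

End Motz.
Lemma unlift_w N (k : 'I_N) : unlift ord_max (widen_ord (leqnSn N) k) = Some k.
Proof. by rewrite widen_lift liftK. Qed.
Lemma unlift_m N : unlift (@ord_max N) ord_max = None.
Proof. exact: unlift_none. Qed.

Lemma ev_eq (R : realFieldType) N (l1 l2 y : 'I_N -> R) : l1 =1 l2 -> ev l1 y = ev l2 y.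
Proof. by move=> h; apply: eq_bigr => k _; rewrite h. Qed.

Section Alt.
Variables (R : realFieldType) (m n : nat) (U : 'M[R]_(m, n)).

Definition real_at (a : 'cV[R]_m) (s : 'I_m -> R) :=
  exists x : 'cV[R]_n, forall i, Num.sg ((U *m x) i 0 - a i 0) = s i.
Definition inker (l : 'I_m -> R) := forall k, \sum_i l i * U i k = 0.
Definition dotl (l : 'I_m -> R) (a : 'cV[R]_m) := \sum_i l i * a i 0.
Definition bad (a : 'cV[R]_m) (s l : 'I_m -> R) :=
  [/\ forall i, 0 <= s i * l i, 0 <= dotl l a & (exists i, 0 < s i * l i) \/ 0 < dotl l a].
Definition sgn3 (s : 'I_m -> R) := forall i, s i = 0 \/ s i = 1 \/ s i = -1.

Lemma mulmx_entry (x : 'cV[R]_n) i : (U *m x) i 0 = \sum_k U i k * x k 0.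
Proof. by rewrite mxE. Qed.

Lemma bad_not_real a s l : inker l -> bad a s l -> real_at a s -> False.
Proof.
move=> hk [h1 h2 h3] [x hx].
pose D i := (U *m x) i 0 - a i 0.
have hsum : \sum_i l i * D i = - dotl l a.
  rewrite /D /dotl; under eq_bigr do rewrite mulrBr.
  rewrite sumrB; apply/eqP; rewrite subr_eq addrC subrr; apply/eqP.
  under eq_bigr do rewrite mulmx_entry mulr_sumr.
  rewrite exchange_big /= big1 // => k _.
  transitivity (x k 0 * \sum_i l i * U i k); last by rewrite hk mulr0.
  by rewrite mulr_sumr; apply: eq_bigr => i _; ring.
have hD i : D i = s i * `|D i| by rewrite -(hx i) -numEsg.
have ht i : 0 <= l i * D i by rewrite hD mulrA [l i * _]mulrC mulr_ge0.
have hs0 : 0 <= \sum_i l i * D i by apply: sumr_ge0.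
case: h3 => [[i hi]|hp]; last by move: hs0; rewrite hsum; lra.
have hDi : 0 < `|D i|.
  rewrite normr_gt0; apply/eqP => h0; move: hi; rewrite -(hx i) -/(D i) h0 sgr0 mul0r ltxx.
  done.
have : 0 < l i * D i by rewrite hD mulrA [l i * _]mulrC mulr_gt0.
have := @sum_ge_term _ _ (fun i => l i * D i) i ht; move: hs0 h2; rewrite hsum /=; lra.
Qed.

Lemma alt a s : sgn3 s -> ~ real_at a s -> exists l, inker l /\ bad a s l.
Proof.
move=> s3 nr.
pose c i := if s i == 0 then 1 else s i.
pose l (j : 'I_m.+1) (k : 'I_n.+1) : R :=
  ext (fun i => c i * ext (fun k' => U i k') (- a i 0) k) (ext (fun _ => 0) 1 k) j.
pose S (j : 'I_m.+1) := if unlift ord_max j is Some i then s i != 0 else true.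
have sc i : s i * c i = if s i == 0 then 0 else 1.
  rewrite /c; case: eqP => [->|hs]; first by rewrite mul0r.
  by case: (s3 i) => [//|[->|->]]; rewrite ?mulr1 ?mulrNN ?mulr1.
case: (motzkin l S) => [[y hy]|[mu [h1 h2 h3]]].
  exfalso; apply: nr.
  have ht : 0 < y ord_max.
    have := hy ord_max; rewrite /S unlift_m ev_split /l !ext_m.
    rewrite /ev big1 ?add0r ?mul1r // => k _; by rewrite /pr ext_m ext_w mul0r.
  exists (\col_k (pr y k / y ord_max)) => i.
  have hl : l (widen_ord (leqnSn m) i) =1 (fun k => c i * ext (fun k' => U i k') (- a i 0) k).
    by move=> k; rewrite /l ext_w.
  have := hy (widen_ord (leqnSn m) i); rewrite /S unlift_w (ev_eq _ hl) ev_split ext_m.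
  set D := \sum_k U i k * pr y k - a i 0 * y ord_max.
  have eD : ev (pr (fun k => c i * ext (fun k' => U i k') (- a i 0) k)) (pr y) + c i * - a i 0 * y ord_max = c i * D.
    rewrite /D /ev mulrBr mulr_sumr; congr (_ + _).
      by apply: eq_bigr => k _; rewrite /pr ext_w mulrA.
    by rewrite mulrN mulNr mulrA.
  rewrite eD.
  have eU : (U *m \col_k (pr y k / y ord_max)) i 0 - a i 0 = D / y ord_max.
    rewrite mxE /D mulrBl mulr_suml -mulrA divff ?gt_eqF // mulr1; congr (_ - _).
    by apply: eq_bigr => k _; rewrite mxE mulrA.
  rewrite eU /c; case: eqP => [->|hs].
    by rewrite mul1r => ->; rewrite mul0r sgr0.
  case: (s3 i) => [//|[->|->]].
    by rewrite mul1r => hD; rewrite gtr0_sg // divr_gt0.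
  rewrite mulN1r oppr_gt0 => hD; rewrite ltr0_sg //.
  by rewrite pmulr_llt0 // invr_gt0.
exists (fun i => c i * mu (widen_ord (leqnSn m) i)).
have hrow k' : \sum_j mu j * l j (widen_ord (leqnSn n) k') =
    \sum_i c i * mu (widen_ord (leqnSn m) i) * U i k'.
  rewrite big_ord_recr /= /l ext_m ext_w mulr0 addr0; apply: eq_bigr => i _.
  by rewrite ext_w ext_w; ring.
have hmax : \sum_j mu j * l j ord_max = mu ord_max - dotl (fun i => c i * mu (widen_ord (leqnSn m) i)) a.
  rewrite big_ord_recr /= /l !ext_m mulr1 addrC /dotl -sumrN; congr (_ + _).
  by apply: eq_bigr => i _; rewrite ext_w ext_m; ring.
have hdot : dotl (fun i => c i * mu (widen_ord (leqnSn m) i)) a = mu ord_max.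
  by apply/eqP; rewrite eq_sym -subr_eq0 -hmax h3.
split.
  by move=> k'; rewrite -hrow h3.
split.
- move=> i; rewrite mulrA sc; case: eqP => hs; rewrite ?mul0r // mul1r.
  by apply: h1; rewrite /S unlift_w; apply/eqP.
- by rewrite hdot; apply: h1; rewrite /S unlift_m.
- case: h2 => j [Sj hj]; case: (ord_cases j) => [ej|[i ej]]; subst j.
    by right; rewrite hdot.
  left; exists i; rewrite mulrA sc; move: Sj; rewrite /S unlift_w => /negbTE ->.
  by rewrite mul1r.
Qed.

End Alt.
Lemma argmin (R : realFieldType) (I : finType) (A : pred I) (f : I -> R) i1 :
  A i1 -> exists i0, A i0 /\ forall i, A i -> f i0 <= f i.
Proof.
move=> A1.
have := foldr_min_mem [seq f i | i <- enum A] (f i1).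
rewrite inE => /orP[/eqP e|/mapP[i0 hi0 e]].
  exists i1; split => // i Ai; rewrite -e; apply: foldr_min_le; apply/mapP; exists i => //.
  by rewrite mem_enum.
exists i0; split; first by rewrite mem_enum in hi0.
move=> i Ai; rewrite -e; apply: foldr_min_le; apply/mapP; exists i => //; by rewrite mem_enum.
Qed.

Section Dec.
Variables (R : realFieldType) (m n : nat) (U : 'M[R]_(m, n)).

Definition supp (l : 'I_m -> R) := [set i | l i != 0].
Definition elem (l : 'I_m -> R) :=
  forall mu, inker U mu -> supp mu \proper supp l -> forall i, mu i = 0.
Definition conf (l nu : 'I_m -> R) := forall i, 0 <= l i * nu i /\ (l i = 0 -> nu i = 0).

Lemma inker_lin l mu x y : inker U l -> inker U mu -> inker U (fun i => x * l i + y * mu i).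
Proof.
move=> hl hm k; under eq_bigr do rewrite mulrDl -!mulrA.
by rewrite big_split /= -!mulr_sumr hl hm !mulr0 addr0.
Qed.

Lemma inker_ext (l1 l2 : 'I_m -> R) : (forall i, l1 i = l2 i) -> inker U l2 -> inker U l1.
Proof. by move=> e h k; rewrite -[RHS](h k); apply: eq_bigr => i _; rewrite e. Qed.

Lemma cut (l mu : 'I_m -> R) : (exists i, 0 < l i * mu i) ->
  exists t, 0 < t /\ (forall i, 0 <= l i * (l i - t * mu i)) /\
    exists i0, l i0 != 0 /\ l i0 - t * mu i0 = 0.
Proof.
case=> i1 h1.
have [i0 [A0 hmin]] := @argmin _ _ (fun i => 0 < l i * mu i) (fun i => l i / mu i) i1 h1.
have nz i : 0 < l i * mu i -> l i != 0 /\ mu i != 0.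
  by move=> h; split; apply/eqP => e; move: h; rewrite e ?mul0r ?mulr0 ltxx.
have rpos i : 0 < l i * mu i -> 0 < l i / mu i.
  move=> h; have [_ hm] := nz i h.
  have -> : l i / mu i = (l i * mu i) / (mu i ^+ 2) by field.
  by rewrite divr_gt0 // exprn_even_gt0.
exists (l i0 / mu i0); split; first exact: rpos.
split.
  move=> i; case: (ltP 0 (l i * mu i)) => h.
    have [_ hm] := nz i h; have [_ hm0] := nz i0 A0.
    have -> : l i * (l i - l i0 / mu i0 * mu i) = (l i * mu i) * (l i / mu i - l i0 / mu i0) by field; rewrite hm hm0.
    by apply: mulr_ge0; [exact: ltW | rewrite subr_ge0 hmin].
  have := rpos i0 A0; have := sqr_ge0 (l i); rewrite expr2 => h2 h3.
  have : 0 <= l i0 / mu i0 * (- (l i * mu i)).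
    by apply: mulr_ge0; [exact: ltW | rewrite oppr_ge0].
  lra.
exists i0; have [hl hm] := nz i0 A0; split => //.
by rewrite divfK // subrr.
Qed.

Lemma conf_card l nu : conf l nu -> (exists i, l i != 0 /\ nu i = 0) -> (#|supp nu| < #|supp l|)%N.
Proof.
move=> hc [i [hi hn]]; apply: proper_card; apply/properP; split.
  apply/subsetP => j; rewrite !inE; apply: contra => /eqP; by case: (hc j) => _ h /h ->.
by exists i; rewrite !inE ?hi ?hn ?eqxx.
Qed.

Lemma conf_scale l nu c : 0 < c -> conf l nu -> conf l (fun i => c * nu i).
Proof.
move=> hc h i; case: (h i) => h1 h2; split.
  by rewrite mulrCA mulr_ge0 // ltW.
by move=> /h2 ->; rewrite mulr0.
Qed.

Lemma supp_scale nu c : c != 0 -> supp (fun i => c * nu i) = supp nu.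
Proof. by move=> hc; apply/setP => i; rewrite !inE mulf_eq0 negb_or hc. Qed.

Lemma split_nonelem l : inker U l -> ~ elem l ->
  exists nu1 nu2, inker U nu1 /\ inker U nu2 /\ conf l nu1 /\ conf l nu2 /\
    (#|supp nu1| < #|supp l|)%N /\ (#|supp nu2| < #|supp l|)%N /\ forall i, l i = nu1 i + nu2 i.
Proof.
move=> hl ne.
case: (classic (exists mu, inker U mu /\ supp mu \proper supp l /\ (exists i, mu i != 0))); last first.
  move=> H; exfalso; apply: ne; move=> mu hk hp i; case: (eqVneq (mu i) 0) => // hi; exfalso.
  by apply: H; exists mu; split; [|split; [|exists i]].
case=> mu [hk [hp [i0 hi0]]].
have hsub : supp mu \subset supp l by case/andP: hp.
have li0 : l i0 != 0 by move/subsetP: hsub => /(_ i0); rewrite !inE; apply.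
have zl i : l i = 0 -> mu i = 0.
  move=> e; case: (eqVneq (mu i) 0) => // h; move/subsetP: hsub => /(_ i); rewrite !inE h e eqxx.
  by move=> /(_ isT).
pose sg := if 0 < l i0 * mu i0 then 1 else -1 : R.
pose mu2 i := sg * mu i.
have hk2 : inker U mu2.
  by apply: (inker_ext _ (inker_lin (0) (sg) hl hk)) => i /=; rewrite /mu2; ring.
have sgnz : sg != 0 by rewrite /sg; case: ifP => _; rewrite ?oppr_eq0 oner_eq0.
have hp2 : supp mu2 \proper supp l by rewrite /mu2 supp_scale.
have zl2 i : l i = 0 -> mu2 i = 0 by move=> /zl e; rewrite /mu2 e mulr0.
have pos2 : exists i, 0 < l i * mu2 i.
  exists i0; rewrite /mu2 /sg; case: (ltP 0 (l i0 * mu i0)) => h; first by rewrite mul1r.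
  have : l i0 * mu i0 != 0 by rewrite mulf_neq0.
  by rewrite mulN1r mulrN oppr_gt0 lt_neqAle h andbT.
have [t [tp [ht [j0 [lj0 ej0]]]]] := cut pos2.
have conf1 : conf l (fun i => l i - t * mu2 i).
  move=> i; split; first exact: ht.
  by move=> e; rewrite e (zl2 i e) mulr0 subrr.
have card1 : (#|supp (fun i => (l i - t * mu2 i)%R)| < #|supp l|)%N.
  by apply: conf_card conf1 _; exists j0.
have hk1 : inker U (fun i => l i - t * mu2 i).
  by apply: (inker_ext _ (inker_lin (1) (-t) hl hk2)) => i /=; ring.
case: (classic (exists j, 0 < l j * (- mu2 j))) => [neg|noneg].
  have [s [sp [hs [j1 [lj1 ej1]]]]] := cut neg.
  have conf2 : conf l (fun i => l i - s * - mu2 i).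
    move=> i; split; first exact: hs.
    by move=> e; rewrite e (zl2 i e) oppr0 mulr0 subrr.
  have card2 : (#|supp (fun i => (l i - s * - mu2 i)%R)| < #|supp l|)%N.
    by apply: conf_card conf2 _; exists j1.
  have hk3 : inker U (fun i => l i - s * - mu2 i).
    by apply: (inker_ext _ (inker_lin (1) (s) hl hk2)) => i /=; ring.
  have st : 0 < s + t by rewrite addr_gt0.
  exists (fun i => s / (s + t) * (l i - t * mu2 i)), (fun i => t / (s + t) * (l i - s * - mu2 i)).
  refine (conj _ (conj _ (conj _ (conj _ (conj _ (conj _ _)))))).
  - by apply: (inker_ext _ (inker_lin (s / (s+t)) 0 hk1 hk1)) => i /=; ring.
  - by apply: (inker_ext _ (inker_lin (t / (s+t)) 0 hk3 hk3)) => i /=; ring.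
  - by apply: conf_scale; rewrite // divr_gt0.
  - by apply: conf_scale; rewrite // divr_gt0.
  - by rewrite supp_scale // mulf_neq0 ?invr_eq0 ?gt_eqF.
  - by rewrite supp_scale // mulf_neq0 ?invr_eq0 ?gt_eqF.
  - by move=> i; field; rewrite gt_eqF.
exists (fun i => l i - t * mu2 i), (fun i => t * mu2 i).
refine (conj hk1 (conj _ (conj conf1 (conj _ (conj card1 (conj _ _)))))).
- by apply: (inker_ext _ (inker_lin (t) (0) hk2 hk2)) => i /=; ring.
- move=> i; split.
    rewrite mulrCA; apply: mulr_ge0; first exact: ltW.
    rewrite leNgt; apply/negP => h; apply: noneg; exists i.
    by rewrite mulrN oppr_gt0.
  by move/zl2 ->; rewrite mulr0.
- by rewrite supp_scale ?gt_eqF //; apply: proper_card.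
- by move=> i; rewrite subrK.
Qed.

Lemma elem_bad a s l : inker U l -> bad a s l -> exists c, [/\ inker U c, bad a s c & elem c].
Proof.
move: {2}(#|supp l|) (leqnn #|supp l|) => k; elim: k l => [|k IH] l hcard hl hb.
  exists l; split => // mu _ /proper_card h i; exfalso.
  by move: (leq_trans h hcard); rewrite ltn0.
case: (classic (elem l)) => [he|ne]; first by exists l.
have [nu1 [nu2 [hk1 [hk2 [c1 [c2 [s1 [s2 e]]]]]]]] := split_nonelem hl ne.
have cs nu i : conf l nu -> 0 <= s i * nu i.
  move=> hc; case: (hc i) => h1 h2; case: hb => hb _ _.
  have := hb i; case: (eqVneq (l i) 0) => [/h2 ->|hli]; first by rewrite mulr0.
  move=> h3; have hl2 : 0 < l i * l i by rewrite -expr2 exprn_even_gt0.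
  have : 0 <= (s i * l i) * (l i * nu i) by rewrite mulr_ge0.
  have -> : s i * l i * (l i * nu i) = (s i * nu i) * (l i * l i) by ring.
  by rewrite pmulr_lge0.
have hd : dotl l a = dotl nu1 a + dotl nu2 a.
  by rewrite /dotl -big_split; apply: eq_bigr => i _; rewrite e mulrDl.
suff [nu [hk hc hcd hbn]] : exists nu, [/\ inker U nu, conf l nu, (#|supp nu| < #|supp l|)%N & bad a s nu].
  by apply: (IH nu) => //; rewrite -ltnS (leq_trans hcd).
case: hb => hb0 hb1 hb2.
have b1 : (forall i, 0 <= s i * nu1 i) by move=> i; exact: cs.
have b2 : (forall i, 0 <= s i * nu2 i) by move=> i; exact: cs.
case: (ltP (dotl nu1 a) 0) => d1.
  exists nu2; split => //; split => //; last right; move: hb1; rewrite hd; lra.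
case: (ltP (dotl nu2 a) 0) => d2.
  exists nu1; split => //; split => //; last right; move: hb1; rewrite hd; lra.
case: (ltP 0 (dotl nu1 a)) => d1'.
  by exists nu1; split => //; split => //; right.
case: (ltP 0 (dotl nu2 a)) => d2'.
  by exists nu2; split => //; split => //; right.
case: hb2 => [[i hi]|]; last by rewrite hd; lra.
move: hi; rewrite e mulrDr => hi.
case: (ltP 0 (s i * nu1 i)) => h1.
  by exists nu1; split => //; split => //; left; exists i.
exists nu2; split => //; split => //; left; exists i.
by have := b1 i; lra.
Qed.

End Dec.
Section Bridge.
Variables (R : realType) (m n : nat) (U : 'M[R]_(m, n)).

Lemma row_sum_inker (c : 'I_m -> R) : \sum_(i < m) c i *: row i U = 0 -> inker U c.
Proof.
move=> h k; move: (congr1 (fun M : 'rV_n => M 0 k) h); rewrite summxE mxE => e.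
rewrite -[RHS]e; by apply: eq_bigr => i _; rewrite !mxE.
Qed.

Lemma inker_row_sum (c : 'I_m -> R) : inker U c -> \sum_(i < m) c i *: row i U = 0.
Proof.
move=> h; apply/matrixP => i' k; rewrite summxE mxE -[RHS](h k).
by apply: eq_bigr => i _; rewrite !mxE.
Qed.

Lemma elem_circuit c : inker U c -> elem U c -> (exists i, c i != 0) -> circuit U (supp c).
Proof.
move=> hk he hnz; split.
  exists c; split; last split => //.
    by move=> i; rewrite inE negbK => /eqP.
  exact: inker_row_sum.
move=> C' hp [mu [h1 [[i hi] h2]]].
have hsub : supp mu \subset C'.
  apply/subsetP => j; rewrite inE; apply: contraR => /h1 ->; by rewrite eqxx.
have := he mu (row_sum_inker h2) (sub_proper_trans hsub hp) i.
by move/eqP: hi.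
Qed.

Lemma circ_mult C (v : 'cV[R]_m) c : circuit_vec U C v -> inker U c -> elem U c ->
  supp c = C -> (exists i, c i != 0) -> exists t, t != 0 /\ forall i, c i = t * v i 0.
Proof.
move=> [hv hsv] hk he hs [e he0].
have eC : e \in C by rewrite -hs inE.
have ve : v e 0 != 0 by apply/hsv.
exists (c e / v e 0); split; first by rewrite mulf_neq0 // invr_eq0.
move=> i; apply/eqP; rewrite -subr_eq0; apply/eqP.
pose mu j := c j - c e / v e 0 * v j 0.
have hkm : inker U mu.
  apply: (inker_ext _ (inker_lin 1 (- (c e / v e 0)) hk (row_sum_inker hv))) => j /=.
  by rewrite /mu; ring.
apply: (he mu hkm); apply/properP; split.
  apply/subsetP => j; rewrite !inE; apply: contraR; rewrite negbK => /eqP hc.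
  have : j \notin C by rewrite -hs inE hc eqxx.
  move=> hnC; case: (eqVneq (v j 0) 0) => [hvj|hvj]; last by move/hsv: hvj => hj; rewrite hj in hnC.
  by rewrite /mu hc hvj mulr0 subr0.
exists e; first by rewrite inE.
by rewrite inE /mu divfK // subrr eqxx.
Qed.

Lemma bad_pos a s (l : 'I_m -> R) x : 0 < x -> bad a s (fun i => x * l i) -> bad a s l.
Proof.
move=> hx [h1 h2 h3].
have ed : dotl (fun i => x * l i) a = x * dotl l a.
  by rewrite /dotl mulr_sumr; apply: eq_bigr => i _; rewrite mulrA.
split.
- by move=> i; have := h1 i; rewrite mulrCA pmulr_rge0.
- by move: h2; rewrite ed pmulr_rge0.
- case: h3 => [[i hi]|hp]; [left; exists i | right].
    by move: hi; rewrite mulrCA pmulr_rgt0.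
  by move: hp; rewrite ed pmulr_rgt0.
Qed.

Lemma bad_ext a s (l1 l2 : 'I_m -> R) : (forall i, l1 i = l2 i) -> bad a s l2 -> bad a s l1.
Proof.
move=> e [h1 h2 h3].
have ed : dotl l1 a = dotl l2 a by apply: eq_bigr => i _; rewrite e.
split; first by move=> i; rewrite e.
  by rewrite ed.
case: h3 => [[i hi]|hp]; [left; exists i; by rewrite e | right; by rewrite ed].
Qed.

Lemma bad_sg a b s (l : 'I_m -> R) : Num.sg (dotl l a) = Num.sg (dotl l b) -> bad a s l -> bad b s l.
Proof.
move=> e [h1 h2 h3]; split => //.
  by rewrite -sgr_ge0 -e sgr_ge0.
case: h3 => [h|h]; [left|right] => //.
by rewrite -sgr_gt0 -e sgr_gt0.
Qed.

Lemma transfer (cC : {set 'I_m} -> 'cV[R]_m) a b s : sgn3 s ->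
  (forall C, circuit U C -> circuit_vec U C (cC C)) ->
  (forall C, circuit U C -> Num.sg (dotv (cC C) a) = Num.sg (dotv (cC C) b)) ->
  real_at U a s -> real_at U b s.
Proof.
move=> s3 hcv hsg ra; apply: NNPP => nrb.
have [l [hk hb]] := alt s3 nrb.
have [c [hkc hbc hec]] := elem_bad hk hb.
have nzc : exists i, c i != 0.
  case: hbc => _ _ [[i hi]|hp].
    by exists i; apply/eqP => e; move: hi; rewrite e mulr0 ltxx.
  case: (pickP (fun i => c i != 0)) => [i hi|hn]; first by exists i.
  move: hp; rewrite /dotl big1 ?ltxx // => i _.
  by move: (hn i) => /= /negbFE /eqP ->; rewrite mul0r.
have hC := elem_circuit hkc hec nzc.
have [t [tnz ht]] := circ_mult (hcv _ hC) hkc hec erefl nzc.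
pose v i := cC (supp c) i 0.
have ea : forall w, dotl (fun i => - v i) w = - dotl v w.
  by move=> w; rewrite /dotl -sumrN; apply: eq_bigr => i _; rewrite mulNr.
have hsgv : Num.sg (dotl v a) = Num.sg (dotl v b) by exact: (hsg _ hC).
case: (ltgtP t 0) => ht0; last by move: tnz; rewrite ht0 eqxx.
- have hb' : bad b s (fun i => - v i).
    apply: (@bad_pos _ _ _ (- t)); first by rewrite oppr_gt0.
    by apply: (bad_ext _ hbc) => i /=; rewrite ht /v; ring.
  have : bad a s (fun i => - v i).
    by apply: (bad_sg _ hb'); rewrite !ea !sgrN hsgv.
  move=> hba; apply: (bad_not_real _ hba ra).
  by apply: (inker_ext _ (inker_lin (-1) 0 (row_sum_inker (hcv _ hC).1) (row_sum_inker (hcv _ hC).1))) => i /=; rewrite /v; ring.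
- have hb' : bad b s v.
    apply: (@bad_pos _ _ _ t) => //.
    by apply: (bad_ext _ hbc) => i /=; rewrite ht /v.
  have : bad a s v by apply: (bad_sg _ hb'); rewrite hsgv.
  move=> hba; exact: (bad_not_real (row_sum_inker (hcv _ hC).1) hba ra).
Qed.

End Bridge.
Section Arr.
Variables (R : realType) (m n : nat) (U : 'M[R]_(m, n)) (cC : {set 'I_m} -> 'cV[R]_m).

Lemma sg_close (u v : R) : `|u - v| < `|v| -> Num.sg u = Num.sg v.
Proof.
move=> h; have h1 := ler_norm (u - v); have h2 : - (u - v) <= `|u - v| by rewrite -normrN ler_norm.
case: (ltgtP v 0) => hv.
- rewrite (ltr0_sg hv) ltr0_sg //; move: h; rewrite (ltr0_norm hv); lra.
- rewrite (gtr0_sg hv) gtr0_sg //; move: h; rewrite (gtr0_norm hv); lra.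
- by move: h; rewrite hv normr0 ltNge normr_ge0.
Qed.

Lemma near_dot (c y z : 'cV[R]_m) e : near_inf z y e ->
  `|dotv c z - dotv c y| <= (\sum_i `|c i 0|) * e.
Proof.
move=> hn; rewrite /dotv -sumrB mulr_suml.
apply: (le_trans (ler_norm_sum _ _ _)); apply: ler_sum => i _.
rewrite -mulrBr normrM; apply: ler_wpM2l => //; exact: ltW.
Qed.

Lemma closure_sg (S : pset R m) (c y : 'cV[R]_m) eps : Defs.closure S y ->
  Num.sg (dotv c y) != 0 -> (forall z, S z -> Num.sg (dotv c z) = eps) -> eps = Num.sg (dotv c y).
Proof.
move=> hcl hnz hS.
have dpos : 0 < `|dotv c y| by rewrite normr_gt0; apply: contra hnz => /eqP ->; rewrite sgr0.
pose M := \sum_i `|c i 0| + 1.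
have M0 : 0 <= \sum_i `|c i 0| by apply: sumr_ge0.
have Mpos : 0 < M by rewrite /M; lra.
have [z [Sz hz]] := hcl (`|dotv c y| / M) (divr_gt0 dpos Mpos).
rewrite -(hS z Sz); apply: sg_close.
apply: (le_lt_trans (near_dot c hz)).
have : `|dotv c y| / M * M = `|dotv c y| by rewrite divfK // gt_eqF.
have : 0 < `|dotv c y| / M by rewrite divr_gt0.
rewrite /M; set X := `|dotv c y| / M; set Y := `|dotv c y|; nra.
Qed.

Lemma same_sg F a b : drelint U cC F a -> drelint U cC F b ->
  forall C, circuit U C -> Num.sg (dotv (cC C) a) = Num.sg (dotv (cC C) b).
Proof.
move=> [e1 [_ [cl1 ha]]] [e2 [_ [cl2 hb]]] C hC.
have selfcl (S : pset R m) y : S y -> Defs.closure S y.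
  move=> Sy e he; exists y; split => // i; by rewrite subrr normr0.
have acl : Defs.closure (dopen_set U cC e2) a by rewrite cl2 -cl1; apply: selfcl.
have bcl : Defs.closure (dopen_set U cC e1) b by rewrite cl1 -cl2; apply: selfcl.
case: (eqVneq (Num.sg (dotv (cC C) a)) 0) => [ha0|ha0].
  case: (eqVneq (Num.sg (dotv (cC C) b)) 0) => [hb0|hb0]; first by rewrite ha0 hb0.
  rewrite -(closure_sg bcl hb0 (fun z hz => hz C hC)).
  by rewrite -(ha C hC).
rewrite -(closure_sg acl ha0 (fun z hz => hz C hC)).
by rewrite (hb C hC).
Qed.

End Arr.
Section Poly.
Variables (R : realType) (m n : nat) (U : 'M[R]_(m, n)) (I J K : {set 'I_m}).
Hypotheses (dIJ : [disjoint I & J]) (dIK : [disjoint I & K]) (dJK : [disjoint J & K])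
  (cov : I :|: J :|: K = setT).

Local Notation Ux x i := ((U *m x) i 0).
Local Notation Pa a := (Ppoly U a I J K).
Local Notation Q a T := (Ppoly U a T (J :\: T) (K :\: T)).

Lemma cover i : [\/ i \in I, i \in J | i \in K].
Proof.
have := in_setT i; rewrite -cov !inE; case/orP => [/orP[]|] h;
  [constructor 1 | constructor 2 | constructor 3]; exact: h.
Qed.

Lemma QP (a : 'cV[R]_m) (T : {set 'I_m}) (x : 'cV[R]_n) : I \subset T -> (Q a T x <-> Pa a x /\ forall i, i \in T -> Ux x i = a i 0).
Proof.
move=> hIT; split.
  move=> hq; split; last by move=> i hi; case: (hq i) => h _; exact: h hi.
  move=> i; case: (hq i) => h1 [h2 h3]; split; [|split].
  - move=> hI; apply: h1; exact: (subsetP hIT).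
  - move=> hJ; case: (boolP (i \in T)) => hT; first by rewrite h1.
    by apply: h2; rewrite inE hT hJ.
  - move=> hK; case: (boolP (i \in T)) => hT; first by rewrite h1.
    by apply: h3; rewrite inE hT hK.
move=> [hp ht] i; case: (hp i) => h1 [h2 h3]; split; [exact: ht|split].
  by rewrite inE => /andP[_ hJ]; exact: h2.
by rewrite inE => /andP[_ hK]; exact: h3.
Qed.

Definition Tmin (a : 'cV[R]_m) (G : pset R n) : {set 'I_m} :=
  [set i | boolp.asbool (forall y, G y -> Ux y i = a i 0)].

Lemma TminP (a : 'cV[R]_m) (G : pset R n) i : reflect (forall y, G y -> Ux y i = a i 0) (i \in Tmin a G).
Proof. by rewrite inE; apply: boolp.asboolP. Qed.

Lemma Ux_lin (p q : R) (x y : 'cV[R]_n) i : Ux (p *: x - q *: y) i = p * Ux x i - q * Ux y i.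
Proof. by rewrite mulmxBr -!scalemxAr !mxE. Qed.

Lemma Ux_avg (al : R) (x0 : 'cV[R]_n) (w : 'I_m -> 'cV[R]_n) i :
  Ux (al *: (x0 + \sum_j w j)) i = al * (Ux x0 i + \sum_j Ux (w j) i).
Proof. by rewrite -scalemxAr mxE mulmxDr mxE mulmx_sumr summxE. Qed.

Lemma dotv_lin (c : 'cV[R]_n) (p q : R) (x y : 'cV[R]_n) : dotv c (p *: x - q *: y) = p * dotv c x - q * dotv c y.
Proof.
rewrite /dotv !mulr_sumr -sumrB; apply: eq_bigr => i _; rewrite !mxE; ring.
Qed.


Lemma dotv_avg (c : 'cV[R]_n) (al : R) (x0 : 'cV[R]_n) (w : 'I_m -> 'cV[R]_n) :
  dotv c (al *: (x0 + \sum_j w j)) = al * (dotv c x0 + \sum_j dotv c (w j)).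
Proof.
rewrite /dotv; transitivity (al * \sum_(i < n) (c i 0 * x0 i 0 + \sum_j c i 0 * w j i 0)).
  rewrite mulr_sumr; apply: eq_bigr => i _; rewrite !mxE summxE !mulrDr mulrCA; congr (_ + _).
  by rewrite !mulr_sumr; apply: eq_bigr => j _; ring.
by rewrite big_split /= exchange_big.
Qed.

Lemma posbound (B : pred 'I_m) (g : 'I_m -> R) : (forall i, B i -> 0 < g i) ->
  exists g0, 0 < g0 /\ forall i, B i -> g0 <= g i.
Proof.
move=> hg; exists (foldr Num.min 1 [seq g i | i <- enum B]); split.
  have := foldr_min_mem [seq g i | i <- enum B] 1; rewrite inE => /orP[/eqP -> //|/mapP[i]].
  by rewrite mem_enum => Bi ->; apply: hg.
by move=> i Bi; apply: foldr_min_le; apply/mapP; exists i => //; rewrite mem_enum.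
Qed.

Lemma sum_neg (f : 'I_m -> R) i : (forall j, f j <= 0) -> f i < 0 -> \sum_j f j < 0.
Proof.
move=> h hi; have := @sum_ge_term _ _ (fun j => - f j) i (fun j => ltac:(rewrite oppr_ge0; exact: h j)).
by rewrite sumrN /=; lra.
Qed.

Lemma sum_pos (f : 'I_m -> R) i : (forall j, 0 <= f j) -> 0 < f i -> 0 < \sum_j f j.
Proof.
move=> h hi; have := @sum_ge_term _ _ f i h; lra.
Qed.


Lemma big2 (V : zmodType) (F : 'I_2 -> V) : \sum_(j < 2) F j = F ord0 + F (lift ord0 ord0).
Proof. by rewrite !big_ord_recl big_ord0 addr0. Qed.

Lemma tight_relint (a : 'cV[R]_m) (G : pset R n) x :
  (forall y, G y -> Pa a y) -> relint G x -> tight U a x = Tmin a G.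
Proof.
move=> hGP [Gx [e [he hrel]]]; apply/setP => i; rewrite /tight !inE.
apply/eqP/boolp.asboolP => [hx|h]; last exact: h.
move=> y Gy; apply: NNPP => hne.
pose M := \sum_k `|x k 0 - y k 0|; pose t := e / (M + 1).
have M0 : 0 <= M by apply: sumr_ge0.
have tpos : 0 < t by rewrite divr_gt0 //; lra.
have tM : t * (M + 1) = e by rewrite /t divfK // gt_eqF //; lra.
pose z := (1 + t) *: x - t *: y.
have Gz : G z.
  apply: hrel.
    exists 2, (fun j : 'I_2 => if j == ord0 then x else y),
      (fun j : 'I_2 => if j == ord0 then 1 + t else - t).
    split; first by move=> j; case: eqP.
    rewrite !big2 /=; split; first by ring.
    by rewrite scaleNr.
  move=> k; rewrite /z !mxE.
  have -> : x k 0 - ((1 + t) * x k 0 - t * y k 0) = t * (y k 0 - x k 0) by ring.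
  rewrite normrM (gtr0_norm tpos) distrC.
  have := @sum_ge_term _ _ (fun k => `|x k 0 - y k 0|) k (fun _ => normr_ge0 _).
  rewrite -/M => hk; have : t * `|x k 0 - y k 0| <= t * M by rewrite ler_pM2l.
  move: tM; rewrite mulrDr mulr1; lra.
have Pz := hGP z Gz; have Py := hGP y Gy.
have ez : Ux z i = (1 + t) * a i 0 - t * Ux y i by rewrite Ux_lin hx.
case: (cover i) => hi.
- by apply: hne; exact: (Py i).1 hi.
- have h1 := (Py i).2.1 hi; have h2 := (Pz i).2.1 hi.
  have h3 : Ux y i < a i 0 by rewrite lt_neqAle h1 andbT; apply/eqP.
  have : 0 < t * (a i 0 - Ux y i) by rewrite mulr_gt0 // subr_gt0.
  move: h2; rewrite ez; lra.
- have h1 := (Py i).2.2 hi; have h2 := (Pz i).2.2 hi.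
  have h3 : a i 0 < Ux y i by rewrite lt_neqAle h1 andbT eq_sym; apply/eqP.
  have : 0 < t * (Ux y i - a i 0) by rewrite mulr_gt0 // subr_gt0.
  move: h2; rewrite ez; lra.
Qed.

Lemma face_empty (a : 'cV[R]_m) : isFace (Pa a) (fun _ => False).
Proof.
exists 0, 1.
have d0 x : dotv (0 : 'cV[R]_n) x = 0 by rewrite /dotv big1 // => k _; rewrite mxE mul0r.
split; first by move=> x _; rewrite d0 ler01.
apply: boolp.funext => x; apply: boolp.propext; split => // -[_].
by rewrite d0 => /eqP; rewrite eq_sym oner_eq0.
Qed.

Lemma face_Q (a : 'cV[R]_m) (T : {set 'I_m}) : I \subset T -> isFace (Pa a) (Q a T).
Proof.
move=> hIT.
pose wt i : R := if i \in J then 1 else if i \in K then -1 else 0.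
exists (\col_k (\sum_(i in T) wt i * U i k)), (\sum_(i in T) wt i * a i 0).
have hdot x : dotv (\col_k (\sum_(i in T) wt i * U i k)) x = \sum_(i in T) wt i * Ux x i.
  rewrite /dotv; under eq_bigr do rewrite mxE mulr_suml.
  rewrite exchange_big; apply: eq_bigr => i _; rewrite mxE mulr_sumr.
  by apply: eq_bigr => k _; ring.
have hterm x i : Pa a x -> wt i * Ux x i <= wt i * a i 0.
  move=> hp; rewrite /wt; case: ifP => hJ; first by rewrite !mul1r; exact: (hp i).2.1 hJ.
  case: ifP => hK; last by rewrite !mul0r.
  by rewrite !mulN1r lerN2; exact: (hp i).2.2 hK.
split.
  by move=> x hp; rewrite hdot; apply: ler_sum => i _; exact: hterm.
apply: boolp.funext => x; apply: boolp.propext; split.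
  move/(QP a x hIT) => [hp ht]; split => //; rewrite hdot.
  by apply: eq_bigr => i hi; rewrite ht.
move=> [hp he]; apply/(QP a x hIT); split => // i hi.
have h0 : \sum_(i in T) (wt i * a i 0 - wt i * Ux x i) = 0.
  by rewrite sumrB -hdot he subrr.
have hnn : forall j, j \in T -> 0 <= wt j * a j 0 - wt j * Ux x j.
  by move=> j _; rewrite subr_ge0; exact: hterm.
have := psumr_eq0P hnn h0 hi.
move/eqP; rewrite subr_eq0 /wt; case: ifP => hJ; first by rewrite !mul1r => /eqP.
case: ifP => hK; first by rewrite !mulN1r eqr_opp => /eqP.
move=> _; case: (cover i) => hc; first exact: (hp i).1 hc.
  by rewrite hc in hJ. by rewrite hc in hK.
Qed.

Lemma avg_sub (al v0 b : R) (v : 'I_m -> R) : al * (m%:R + 1) = 1 ->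
  al * (v0 + \sum_j v j) - b = al * ((v0 - b) + \sum_j (v j - b)).
Proof.
move=> hal; rewrite sumrB sumr_const card_ord.
have e : b *+ m = b * m%:R by rewrite mulr_natr.
rewrite e.
transitivity (al * (v0 + \sum_j v j) - al * (m%:R + 1) * b); first by rewrite hal mul1r.
ring.
Qed.

Lemma face_struct (a : 'cV[R]_m) (G : pset R n) x0 : isFace (Pa a) G -> G x0 ->
  (exists x1, G x1 /\ tight U a x1 = Tmin a G) /\ (forall y, G y <-> Q a (Tmin a G) y).
Proof.
case=> c [d [hcd hG]] Gx0.
have hGe y : G y <-> Pa a y /\ dotv c y = d by rewrite hG.
set T := Tmin a G.
have hIT : I \subset T.
  by apply/subsetP => i hi; apply/TminP => y /hGe [Py _]; exact: (Py i).1 hi.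
have hw : forall i, exists w, G w /\ (i \notin T -> Ux w i != a i 0).
  move=> i; case: (boolP (i \in T)) => hT; first by exists x0.
  apply: NNPP => hn; move/negP: hT; apply; apply/TminP => y Gy.
  apply: NNPP => hne; apply: hn; exists y; split => // _; exact/eqP.
have [w hwP] := boolp.choice hw.
have mpos : 0 < m%:R + 1 :> R by have := ler0n R m; lra.
pose al := (m%:R + 1 : R)^-1.
have hal : al * (m%:R + 1) = 1 by rewrite /al mulVf // gt_eqF.
have alp : 0 < al by rewrite invr_gt0.
pose x1 := al *: (x0 + \sum_j w j).
have [Px0 dx0] := (hGe x0).1 Gx0.
have Pw j : Pa a (w j) by have [h _] := (hGe (w j)).1 (hwP j).1.
have dw j : dotv c (w j) = d by have [_ h] := (hGe (w j)).1 (hwP j).1.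
have ex1 i : Ux x1 i - a i 0 = al * ((Ux x0 i - a i 0) + \sum_j (Ux (w j) i - a i 0)).
  by rewrite /x1 Ux_avg avg_sub.
have Px1 : Pa a x1.
  move=> i; split; [|split].
  - move=> hi; apply/eqP; rewrite -subr_eq0 ex1 (Px0 i).1 // big1 ?subrr ?addr0 ?mulr0 //.
    by move=> j _; rewrite (Pw j i).1 // subrr.
  - move=> hi; rewrite -subr_le0 ex1 pmulr_rle0 //.
    have h1 : Ux x0 i - a i 0 <= 0 by rewrite subr_le0 (Px0 i).2.1.
    have h2 : \sum_j (Ux (w j) i - a i 0) <= 0.
      by apply: sumr_le0 => j _; rewrite subr_le0 (Pw j i).2.1.
    lra.
  - move=> hi; rewrite -subr_ge0 ex1 pmulr_rge0 //.
    by rewrite addr_ge0 // ?subr_ge0 ?(Px0 i).2.2 // sumr_ge0 // => j _; rewrite subr_ge0 (Pw j i).2.2.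
have dx1 : dotv c x1 = d.
  rewrite /x1 dotv_avg dx0; under eq_bigr do rewrite dw.
  rewrite sumr_const card_ord -[d *+ m]mulr_natr.
  by transitivity (al * (m%:R + 1) * d); [ring | rewrite hal mul1r].
have Gx1 : G x1 by apply/hGe.
have tx1 : tight U a x1 = T.
  apply/setP => i; rewrite /tight inE.
  case: (boolP (i \in T)) => hT.
    by apply/eqP; move/TminP: hT; apply.
  apply/negbTE; rewrite -subr_eq0 ex1 mulf_eq0 negb_or gt_eqF //=.
  have [_ hwi] := hwP i; have hwi' := hwi hT.
  case: (cover i) => hc.
  - by move: hT; rewrite (subsetP hIT i hc).
  - have h1 : Ux x0 i - a i 0 <= 0 by rewrite subr_le0 (Px0 i).2.1.
    have h2 : \sum_j (Ux (w j) i - a i 0) < 0.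
      apply: (@sum_neg (fun j => Ux (w j) i - a i 0) i).
        by move=> j; rewrite subr_le0 (Pw j i).2.1.
      by rewrite subr_lt0 lt_neqAle hwi' (Pw i i).2.1.
    rewrite lt_eqF //; lra.
  - have h1 : 0 <= Ux x0 i - a i 0 by rewrite subr_ge0 (Px0 i).2.2.
    have h2 : 0 < \sum_j (Ux (w j) i - a i 0).
      apply: (@sum_pos (fun j => Ux (w j) i - a i 0) i).
        by move=> j; rewrite subr_ge0 (Pw j i).2.2.
      by rewrite subr_gt0 lt_neqAle eq_sym hwi' (Pw i i).2.2.
    rewrite gt_eqF //; lra.
split; first by exists x1.
move=> y; split.
  move=> Gy; apply/(QP a y hIT); split; first by have [] := (hGe y).1 Gy.
  by move=> i /TminP; apply.
move/(QP a y hIT) => [Py ty]; apply/hGe; split => //.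
apply/eqP; rewrite eq_le hcd //=.
have hgap : forall i, i \notin T -> 0 < `|Ux x1 i - a i 0|.
  move=> i hT; rewrite normr_gt0 subr_eq0; apply/negP => e.
  by move: hT; rewrite -tx1 /tight inE e.
have [g0 [g0p hg0]] := posbound (B := fun i => i \notin T) hgap.
pose M := \sum_i `|Ux x1 i - Ux y i|.
have M0 : 0 <= M by apply: sumr_ge0.
pose t := g0 / (M + 1).
have tpos : 0 < t by rewrite divr_gt0 //; lra.
have tM : t * (M + 1) = g0 by rewrite /t divfK // gt_eqF //; lra.
pose z := (1 + t) *: x1 - t *: y.
have ez i : Ux z i = Ux x1 i + t * (Ux x1 i - Ux y i) by rewrite Ux_lin; ring.
have Pz : Pa a z.
  move=> i; case: (boolP (i \in T)) => hT.
    have e1 : Ux x1 i = a i 0 by move: hT; rewrite -tx1 inE => /eqP.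
    have e2 : Ux z i = a i 0 by rewrite ez e1 (ty i hT) subrr mulr0 addr0.
    by rewrite e2; split => // _; split => _.
  have hd : `|t * (Ux x1 i - Ux y i)| < `|Ux x1 i - a i 0|.
    apply: (lt_le_trans _ (hg0 i hT)); rewrite normrM (gtr0_norm tpos).
    have := @sum_ge_term _ _ (fun i => `|Ux x1 i - Ux y i|) i (fun _ => normr_ge0 _).
    rewrite -/M => hk; have : t * `|Ux x1 i - Ux y i| <= t * M by rewrite ler_pM2l.
    move: tM; rewrite mulrDr mulr1; lra.
  have hn1 := ler_norm (t * (Ux x1 i - Ux y i)).
  have hn2 : - (t * (Ux x1 i - Ux y i)) <= `|t * (Ux x1 i - Ux y i)| by rewrite -normrN ler_norm.
  split; [|split].
  - by move=> hi; move: hT; rewrite (subsetP hIT i hi).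
  - move=> hi; have h1 := (Px1 i).2.1 hi; rewrite ez.
    move: hd; rewrite [X in _ < X]ler0_norm ?subr_le0 //; lra.
  - move=> hi; have h1 := (Px1 i).2.2 hi; rewrite ez.
    move: hd; rewrite [X in _ < X]ger0_norm ?subr_ge0 //; lra.
have := hcd z Pz; rewrite /z dotv_lin dx1 => h.
have : t * d <= t * dotv c y by lra.
by rewrite ler_pM2l.
Qed.

Definition sT (T : {set 'I_m}) i : R := if i \in T then 0 else if i \in J then -1 else 1.

Lemma sT3 T : sgn3 (sT T).
Proof. by move=> i; rewrite /sT; case: ifP => _; [left|case: ifP => _; right; [right|left]]. Qed.

Lemma real_iff (a : 'cV[R]_m) (T : {set 'I_m}) x : I \subset T ->
  (Pa a x /\ tight U a x = T) <-> (forall i, Num.sg (Ux x i - a i 0) = sT T i).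
Proof.
move=> hIT; split.
  move=> [hp ht] i; rewrite /sT; case: (boolP (i \in T)) => hT.
    by move: hT; rewrite -ht inE => /eqP ->; rewrite subrr sgr0.
  have hne : Ux x i != a i 0 by move: hT; rewrite -ht inE.
  case: ifP => hJ.
    apply: ltr0_sg; rewrite subr_lt0 lt_neqAle hne; exact: (hp i).2.1 hJ.
  case: (cover i) => hc.
  - by move: hT; rewrite (subsetP hIT i hc).
  - by rewrite hc in hJ.
  - apply: gtr0_sg; rewrite subr_gt0 lt_neqAle eq_sym hne; exact: (hp i).2.2 hc.
move=> hs.
have hT i : i \in T -> Ux x i = a i 0.
  move=> hi; move: (hs i); rewrite /sT hi => /eqP; rewrite sgr_eq0 subr_eq0 => /eqP //.
have hnT i : i \notin T -> i \in J -> Ux x i < a i 0.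
  move=> hi hj; move: (hs i); rewrite /sT (negbTE hi) hj => /eqP.
  by rewrite (sgr_cp0 _).1.2 subr_lt0.
have hnT' i : i \notin T -> i \in K -> a i 0 < Ux x i.
  move=> hi hk; move: (hs i); rewrite /sT (negbTE hi) (disjointFl dJK hk) => /eqP.
  by rewrite (sgr_cp0 _).1.1 subr_gt0.
split.
  move=> i; split; [|split].
  - by move=> hi; apply: hT; exact: (subsetP hIT).
  - move=> hj; case: (boolP (i \in T)) => hi; first by rewrite hT.
    exact: ltW (hnT i hi hj).
  - move=> hk; case: (boolP (i \in T)) => hi; first by rewrite hT.
    exact: ltW (hnT' i hi hk).
apply/setP => i; rewrite /tight inE; case: (boolP (i \in T)) => hi; first by rewrite hT ?eqxx.
case: (cover i) => hc.
- by move: hi; rewrite (subsetP hIT i hc).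
- by rewrite lt_eqF // hnT.
- by rewrite gt_eqF // hnT'.
Qed.

Lemma Tmin_Q (a : 'cV[R]_m) (T : {set 'I_m}) x : I \subset T -> Pa a x -> tight U a x = T ->
  Tmin a (Q a T) = T.
Proof.
move=> hIT hp ht; apply/setP => i; apply/TminP/idP => [h|hi y].
  have Qx : Q a T x.
    apply/(QP a x hIT); split => // j; rewrite -ht inE => /eqP //.
  by rewrite -ht inE (h x Qx).
by move/(QP a y hIT) => [_ hy]; exact: hy.
Qed.

End Poly.

Unset Implicit Arguments. Set Strict Implicit.

Theorem mainTheorem10 (R : realType) (n m : nat) (U : 'M[R]_(m, n))
  (cC : {set 'I_m} -> 'cV[R]_m)
  (F : pset R m) (a b : 'cV[R]_m) (I J K : {set 'I_m}) :
  (forall i : 'I_m, row i U != 0) ->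
  (forall C, circuit U C -> circuit_vec U C (cC C)) ->
  dface U cC F -> drelint U cC F a -> drelint U cC F b ->
  [disjoint I & J] -> [disjoint I & K] -> [disjoint J & K] ->
  I :|: J :|: K = setT ->
  exists Phi : pset R n -> pset R n,
    (* Phi(empty) = empty *)
    Phi (fun _ => False) = (fun _ => False) /\
    (* definition of Phi on nonempty faces, nonemptiness, active triple index *)
    (forall G, isFace (Ppoly U a I J K) G -> (exists x, G x) ->
       forall x, relint G x ->
         Phi G = Ppoly U b (tight U a x) (J :\: tight U a x) (K :\: tight U a x) /\
         (exists y, Phi G y) /\
         (forall y, relint (Phi G) y ->
            (tight U b y, J :\: tight U b y, K :\: tight U b y) =
            (tight U a x, J :\: tight U a x, K :\: tight U a x))) /\
    (* well-defined map of face posets *)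
    (forall G, isFace (Ppoly U a I J K) G -> isFace (Ppoly U b I J K) (Phi G)) /\
    (* injective on faces *)
    (forall G1 G2, isFace (Ppoly U a I J K) G1 -> isFace (Ppoly U a I J K) G2 ->
       Phi G1 = Phi G2 -> G1 = G2) /\
    (* surjective onto faces *)
    (forall H, isFace (Ppoly U b I J K) H ->
       exists G, isFace (Ppoly U a I J K) G /\ Phi G = H).
Proof.
move=> _ hcv hF ha hb dIJ dIK dJK cov.
have hsg : forall C, circuit U C -> Num.sg (dotv (cC C) a) = Num.sg (dotv (cC C) b).
  by move=> C hC; exact: (same_sg ha hb hC).
have hsg' : forall C, circuit U C -> Num.sg (dotv (cC C) b) = Num.sg (dotv (cC C) a).
  by move=> C hC; rewrite hsg.
have tr : forall a' b' : 'cV[R]_m,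
    (forall C, circuit U C -> Num.sg (dotv (cC C) a') = Num.sg (dotv (cC C) b')) ->
    forall T : {set 'I_m}, I \subset T -> (exists x, Ppoly U a' I J K x /\ tight U a' x = T) ->
    exists y, Ppoly U b' I J K y /\ tight U b' y = T.
  move=> a' b' hs T hIT [x hx].
  have [y hy] := transfer (sT3 R J T) hcv hs (ex_intro _ x ((real_iff U dJK cov a' x hIT).1 hx)).
  by exists y; apply/(real_iff U dJK cov b' y hIT).
have facesub : forall (c : 'cV[R]_m) G, isFace (Ppoly U c I J K) G -> forall y, G y -> Ppoly U c I J K y.
  move=> c G [c' [d [h1 hG]]] y; rewrite hG; by case.
pose Phi (G : pset R n) : pset R n :=
  if boolp.pselect (isFace (Ppoly U a I J K) G /\ exists x, G x)
  then Ppoly U b (Tmin U a G) (J :\: Tmin U a G) (K :\: Tmin U a G) else (fun _ => False).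
have phi_empty : forall G, ~ (exists x, G x) -> Phi G = (fun _ => False).
  move=> G hne; rewrite /Phi; case: boolp.pselect => // -[hf h]; by case: hne.
have key : forall G, isFace (Ppoly U a I J K) G -> (exists x, G x) ->
   [/\ Phi G = Ppoly U b (Tmin U a G) (J :\: Tmin U a G) (K :\: Tmin U a G),
       I \subset Tmin U a G,
       (forall y, G y <-> Ppoly U a (Tmin U a G) (J :\: Tmin U a G) (K :\: Tmin U a G) y),
       exists y, Ppoly U b I J K y /\ tight U b y = Tmin U a G &
       Tmin U b (Phi G) = Tmin U a G].
  move=> G hG [x0 Gx0].
  have e : Phi G = Ppoly U b (Tmin U a G) (J :\: Tmin U a G) (K :\: Tmin U a G).
    by rewrite /Phi; case: boolp.pselect => // -[]; split => //; exists x0.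
  have [[x1 [Gx1 tx1]] hGQ] := face_struct cov hG Gx0.
  have hIT : I \subset Tmin U a G.
    by apply/subsetP => i hi; apply/TminP => y Gy; exact: (facesub _ _ hG y Gy i).1 hi.
  have [y1 [Py1 ty1]] := tr a b hsg _ hIT (ex_intro _ x1 (conj (facesub _ _ hG _ Gx1) tx1)).
  split => //; first by exists y1.
  by rewrite e; exact: Tmin_Q hIT Py1 ty1.
exists Phi; split.
  by apply: phi_empty => -[x []].
split.
  move=> G hG hne x hx.
  have [e hIT hGQ [y1 [Py1 ty1]] hTb] := key G hG hne.
  have tx : tight U a x = Tmin U a G := tight_relint cov (facesub _ _ hG) hx.
  rewrite tx; split => //; split.
    exists y1; rewrite e; apply/(QP U J K b y1 hIT); split => // i.
    by rewrite -ty1 inE => /eqP.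
  move=> y hy.
  have hPP : forall z, Phi G z -> Ppoly U b I J K z.
    by move=> z; rewrite e => /(QP U J K b z hIT) [].
  by rewrite (tight_relint cov hPP hy) hTb.
split.
  move=> G hG; case: (classic (exists x, G x)) => hne.
    have [e hIT _ _ _] := key G hG hne.
    rewrite e. exact (face_Q U cov b hIT).
  by rewrite phi_empty //; exact: face_empty.
split.
  move=> G1 G2 hG1 hG2 heq.
  case: (classic (exists x, G1 x)) => hne1; case: (classic (exists x, G2 x)) => hne2.
  - have [e1 hIT1 hGQ1 _ hTb1] := key G1 hG1 hne1.
    have [e2 hIT2 hGQ2 _ hTb2] := key G2 hG2 hne2.
    have eT : Tmin U a G1 = Tmin U a G2 by rewrite -hTb1 -hTb2 heq.
    apply: boolp.funext => y; apply: boolp.propext.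
    by rewrite hGQ1 hGQ2 eT.
  - have [e1 hIT1 _ [y1 [Py1 ty1]] _] := key G1 hG1 hne1.
    have : Phi G1 y1.
      rewrite e1; apply/(QP U J K b y1 hIT1); split => // i.
      by rewrite -ty1 inE => /eqP.
    by rewrite heq phi_empty.
  - have [e2 hIT2 _ [y2 [Py2 ty2]] _] := key G2 hG2 hne2.
    have : Phi G2 y2.
      rewrite e2; apply/(QP U J K b y2 hIT2); split => // i.
      by rewrite -ty2 inE => /eqP.
    by rewrite -heq phi_empty.
  - apply: boolp.funext => y; apply: boolp.propext; split => h.
      by case: hne1; exists y.
    by case: hne2; exists y.
move=> H hH; case: (classic (exists y, H y)) => [[y0 Hy0]|hne]; last first.
  exists (fun _ => False); split; first exact: face_empty.
  rewrite phi_empty; last by case.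
  apply: boolp.funext => y; apply: boolp.propext; split => // h.
  by case: hne; exists y.
have [[y1 [Hy1 ty1]] hHQ] := face_struct cov hH Hy0.
set T := Tmin U b H in ty1 hHQ.
have hIT : I \subset T.
  by apply/subsetP => i hi; apply/TminP => y Hy; exact: (facesub _ _ hH y Hy i).1 hi.
have [x1 [Px1 tx1]] := tr b a hsg' T hIT (ex_intro _ y1 (conj (facesub _ _ hH _ Hy1) ty1)).
exists (Ppoly U a T (J :\: T) (K :\: T)); split; first exact (face_Q U cov a hIT).
have hGne : exists x, Ppoly U a T (J :\: T) (K :\: T) x.
  exists x1; apply/(QP U J K a x1 hIT); split => // i.
  by rewrite -tx1 inE => /eqP.
have [e _ _ _ _] := key _ (face_Q U cov a hIT) hGne.
have eT : Tmin U a (Ppoly U a T (J :\: T) (K :\: T)) = T := Tmin_Q hIT Px1 tx1.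
rewrite e eT; apply: boolp.funext => y; apply: boolp.propext.
by rewrite hHQ.
Qed.
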